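(* If $G$ is a graph that has a min-max clique covering with simple intersection, then both $G$ and its compressed cliques graph $\mathcal{C}(G)$ are claw-free (contain no induced subgraph isomorphic to $K_{1,3}$).
   Context: A clique covering of a graph is a set of cliques such that every edge lies in at least one of them; $\operatorname{cc}(G)$ is its minimum size. A min-max clique covering is a clique covering of size $\operatorname{cc}(G)$ consisting of maximal cliques; it has simple intersection if no three distinct cliques of it share a vertex. Given such a covering $\{C_1,\dots,C_\ell\}$, put $C_{i,j}=C_i\cap C_j$ ($i\ne j$) and $C_{i,i}=C_i\setminus\bigcup_{j\ne i}C_j$; the compressed cliques graph $\mathcal{C}(G)$ has a vertex $v_{i,j}$ for each non-empty $C_{i,j}$ (including $i=j$), with $v_{i,j}\sim v_{i',j'}$ iff $\{i,j\}\cap\{i',j'\}\ne\emptyset$. *)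

(* Defs.v *)
From mathcomp Require Import all_boot.
Set Implicit Arguments. Unset Strict Implicit. Unset Printing Implicit Defensive.

Section Graphs.
Variable T : finType.

Definition simple_graph (e : rel T) : Prop := symmetric e /\ irreflexive e.

Definition is_clique (e : rel T) (C : {set T}) : Prop :=
  forall x y, x \in C -> y \in C -> x != y -> e x y.

Definition maximal_clique (e : rel T) (C : {set T}) : Prop :=
  is_clique e C /\ forall D : {set T}, is_clique e D -> C \subset D -> D = C.

Definition clique_covering (e : rel T) (P : {set {set T}}) : Prop :=
  (forall C, C \in P -> is_clique e C) /\
  (forall x y, e x y -> exists2 C, C \in P & (x \in C) && (y \in C)).

Definition minmax_clique_covering (e : rel T) (P : {set {set T}}) : Prop :=
  [/\ clique_covering e P,
      (forall Q, clique_covering e Q -> #|P| <= #|Q|) &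
      (forall C, C \in P -> maximal_clique e C)].

Definition simple_intersection (P : {set {set T}}) : Prop :=
  forall C1 C2 C3 x, C1 \in P -> C2 \in P -> C3 \in P ->
    C1 != C2 -> C1 != C3 -> C2 != C3 ->
    ~ [/\ x \in C1, x \in C2 & x \in C3].

(* The set C_{i,j}, indexed by the unordered pair S = {C_i, C_j} (a subset of
   P of size 1 or 2): for S = {C_i, C_j} with i <> j it is C_i ∩ C_j,
   for S = {C_i} it is C_i minus the union of the other cliques. *)
Definition cpart (P : {set {set T}}) (S : {set {set T}}) : {set T} :=
  if #|S| == 2 then \bigcap_(C in S) C
  else \bigcup_(C in S) C :\: \bigcup_(D in P :\: S) D.

Definition ccg_vertex (P : {set {set T}}) (S : {set {set T}}) : bool :=
  [&& S \subset P, 0 < #|S| <= 2 & cpart P S != set0].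

Definition ccg_adj (S S' : {set {set T}}) : bool :=
  (S != S') && (S :&: S' != set0).

End Graphs.

Definition claw_free (U : finType) (V : pred U) (r : rel U) : Prop :=
  ~ exists x a b c,
      [/\ [&& x \in V, a \in V, b \in V & c \in V],
          [&& a != b, a != c & b != c],
          [&& r x a, r x b & r x c] &
          [&& ~~ r a b, ~~ r a c & ~~ r b c]].

(* Main.v *)
Require Import Defs.
From mathcomp Require Import all_boot.

Lemma three_le (U : finType) (X : {set U}) (a b c : U) :
  a \in X -> b \in X -> c \in X -> a != b -> a != c -> b != c -> 3 <= #|X|.
Proof.
move=> ha hb hc ab ac bc.
have -> : 3 = #|[set a; b; c]|.
  by rewrite setUC cardsU1 cards2 !inE ab ![c == _]eq_sym (negbTE ac) (negbTE bc).
apply: subset_leq_card; apply/subsetP => y; rewrite !inE.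
by case/orP => [/orP[/eqP -> | /eqP ->] | /eqP ->].
Qed.

Theorem mainTheorem10 (T : finType) (e : rel T) (P : {set {set T}}) :
  simple_graph e ->
  minmax_clique_covering e P ->
  simple_intersection P ->
  claw_free (fun _ : T => true) e /\
  claw_free (ccg_vertex P) (@ccg_adj T).
Proof.
move=> [esym eirr] [[Pcl Pcov] _ _] Psi; split.
- move=> [x [a [b [c [_ /and3P[ab ac bc] /and3P[xa xb xc] /and3P[nab nac nbc]]]]]].
  have [Ca CaP /andP[xCa aCa]] := Pcov _ _ xa.
  have [Cb CbP /andP[xCb bCb]] := Pcov _ _ xb.
  have [Cc CcP /andP[xCc cCc]] := Pcov _ _ xc.
  have [eab|nab'] := eqVneq Ca Cb.
    by move: nab; rewrite (Pcl _ CaP a b aCa _ ab) // eab.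
  have [eac|nac'] := eqVneq Ca Cc.
    by move: nac; rewrite (Pcl _ CaP a c aCa _ ac) // eac.
  have [ebc|nbc'] := eqVneq Cb Cc.
    by move: nbc; rewrite (Pcl _ CbP b c bCb _ bc) // ebc.
  by apply: (Psi Ca Cb Cc x).
- move=> [X [A [B [C [/and4P[vX _ _ _] /and3P[ab ac bc] /and3P[xa xb xc] /and3P[nab nac nbc]]]]]].
  move: vX => /and3P[_ /andP[_ X2] _].
  have dis : forall Y Z : {set {set T}}, Y != Z -> ~~ ccg_adj Y Z -> Y :&: Z = set0.
    by move=> Y Z yz; rewrite /ccg_adj yz /= negbK => /eqP.
  have gt : forall Y, ccg_adj X Y -> exists p, p \in X :&: Y.
    by move=> Y /andP[_ /set0Pn].
  have [pa hpa] := gt _ xa; have [pb hpb] := gt _ xb; have [pc hpc] := gt _ xc.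
  move: hpa hpb hpc; rewrite !inE => /andP[pXa pA] /andP[pXb pB] /andP[pXc pC].
  have neq : forall (Y Z : {set {set T}}) p q, Y :&: Z = set0 -> p \in Y -> q \in Z -> p != q.
    move=> Y Z p q h py qz; apply/eqP => epq; subst q.
    have : p \in Y :&: Z by rewrite inE py qz.
    by rewrite h inE.
  have := @three_le _ X _ _ _ pXa pXb pXc (neq _ _ _ _ (dis _ _ ab nab) pA pB)
    (neq _ _ _ _ (dis _ _ ac nac) pA pC) (neq _ _ _ _ (dis _ _ bc nbc) pB pC).
  by rewrite ltnNge X2.
Qed.
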